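(* Let $n\ge 4$, let $H$ be a Hamiltonian cycle of the complete graph $K_n$ on $V=\{1,\dots,n\}$, and let $k\in\{2,3,\dots,n\}$. Let $H'$ be any $k$-exchange of $H$. Then one application of the vertex-based random solution generation with the matrix $\Pi^H$ outputs $H'$ with probability $\Omega(1/n^{2k-1})$.
   Context: For a Hamiltonian cycle $H$, $\Pi^H=(\pi_{i,j})$ is the symmetric $n\times n$ matrix with $\pi_{i,i}=0$, $\pi_{i,j}=1-\frac1n$ if $\{i,j\}\in H$ and $\pi_{i,j}=\frac{1}{n(n-2)}$ otherwise. (In the algorithm studied, $\Pi^H$ is the sampling matrix in iteration $t+1$ when $H$ is the best solution sampled in iteration $t$.) Vertex-based generation from $\Pi$: pick a start vertex uniformly at random; while unvisited vertices remain, from the current vertex $v$ move to an unvisited vertex $v'$ chosen with probability $\pi_{v,v'}/\sum_{j\text{ unvisited}}\pi_{v,j}$; output the Hamiltonian cycle visiting vertices in this order. A $k$-exchange of $H$ is a Hamiltonian cycle obtained from $H$ by removing $k$ of its edges and adding $k$ edges not in $H$. *)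

(* Defs.v *)
From HB Require Import structures.
From mathcomp Require Import all_boot all_order all_algebra.
From mathcomp Require Import perm.
Set Implicit Arguments. Unset Strict Implicit. Unset Printing Implicit Defensive.
Import Order.TTheory GRing.Theory Num.Theory.
Local Open Scope ring_scope.

(* Vertices of K_n are 'I_n; an edge of K_n is a 2-element set {set 'I_n}. *)

Definition cyc_edges (n : nat) (p : {perm 'I_n}) : {set {set 'I_n}} :=
  [set [set p i; p (ordS i)] | i : 'I_n].

Definition ham_cycle (n : nat) (H : {set {set 'I_n}}) : Prop :=
  exists p : {perm 'I_n}, H = cyc_edges p.

Definition k_exchange (n : nat) (H H' : {set {set 'I_n}}) (k : nat) : Prop :=
  ham_cycle H' /\
  exists A B : {set {set 'I_n}},
    [/\ A \subset H, #|A| = k, [disjoint B & H], #|B| = k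
      & H' = (H :\: A) :|: B].

Definition PiH (R : fieldType) (n : nat) (H : {set {set 'I_n}}) (i j : 'I_n) : R :=
  if i == j then 0
  else if [set i; j] \in H then 1 - 1 / n%:R
  else 1 / (n%:R * (n - 2)%:R).

(* Probability that vertex-based generation from Pi visits the vertices in
   the order p 0, p 1, ..., p (n-1): start vertex uniform (1/n), then at step i
   (current vertex p i, visited set {p 0,...,p i}) move to p (i+1) with probability
   Pi(p i, p (i+1)) / sum_{j unvisited} Pi(p i, j). *)
Definition order_prob (R : fieldType) (n : nat) (Pi : 'I_n -> 'I_n -> R)
    (p : {perm 'I_n}) : R :=
  (1 / n%:R) *
  \prod_(i : 'I_n | (i.+1 < n)%N)
     (Pi (p i) (p (ordS i)) /
      \sum_(j : 'I_n | j \notin [set p m | m : 'I_n & (m <= i)%N]) Pi (p i) j).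

Definition gen_prob (R : fieldType) (n : nat) (Pi : 'I_n -> 'I_n -> R)
    (H' : {set {set 'I_n}}) : R :=
  \sum_(p : {perm 'I_n} | cyc_edges p == H') order_prob Pi p.

(* Main.v *)
Require Import Defs.
From HB Require Import structures.
From mathcomp Require Import all_boot all_order all_algebra.
From mathcomp Require Import perm.
From mathcomp Require Import zify ring lra.
Set Implicit Arguments. Unset Strict Implicit. Unset Printing Implicit Defensive.
Import Order.TTheory GRing.Theory Num.Theory.
Local Open Scope ring_scope.

Lemma valS n (i : 'I_n) : (ordS i : nat) = if (i.+1 < n)%N then i.+1 else 0%N.
Proof.
rewrite /ordS /=; case: ltnP => h; first by rewrite modn_small.
have -> : i.+1 = n by have := ltn_ord i; lia.
by rewrite modnn.
Qed.

Lemma val_pred n (i : 'I_n) : (0 < i)%N -> (ord_pred i : nat) = i.-1.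
Proof.
move=> h; have := ord_predK i; set j := ord_pred i => e.
have e' : (ordS j : nat) = i by rewrite e.
rewrite valS in e'; move: e'; case: ifP => _ /=; lia.
Qed.

Lemma ordS_neq n (i : 'I_n) : (2 <= n)%N -> ordS i != i.
Proof.
move=> h; apply/eqP => /(congr1 (@nat_of_ord n)); rewrite valS; case: ifP => /= ?; lia.
Qed.

Lemma ordSS_neq n (i : 'I_n) : (3 <= n)%N -> ordS (ordS i) != i.
Proof.
move=> h; apply/eqP => /(congr1 (@nat_of_ord n)).
move: (valS i) (valS (ordS i)) (ltn_ord i).
move: (ordS (ordS i)) (ordS i) => l j.
case: ifP => c1; case: ifP => c2; lia.
Qed.

Lemma edge_inj n (p : {perm 'I_n}) : (3 <= n)%N ->
  injective (fun i => [set p i; p (ordS i)]).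
Proof.
move=> h i j /= e.
have : p i \in [set p j; p (ordS j)] by rewrite -e set21.
have : p (ordS i) \in [set p j; p (ordS j)] by rewrite -e set22.
move=> /set2P [] /perm_inj e1 /set2P [] /perm_inj e2 //.
- by move: (ordSS_neq j h); rewrite -e2 e1 eqxx.
- by apply: ordS_inj.
Qed.

Lemma valiter n (x : 'I_n) m : (iter m (@ordS n) x : nat) = ((x + m) %% n)%N.
Proof.
elim: m => [|m IH] /=; first by rewrite addn0 modn_small.
rewrite /ordS /= IH addnS -addn1 modnDml addn1 //.
Qed.

Lemma bernoulli (R : realFieldType) (x : R) m : 0 <= x -> x <= 1 ->
  1 - m%:R * x <= (1 - x) ^+ m.
Proof.
move=> x0 x1; elim: m => [|m IH]; first by rewrite mul0r subr0 expr0.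
rewrite exprS.
have h : 0 <= (1 - x) ^+ m by rewrite exprn_ge0 // subr_ge0.
have h2: 0 <= 1 - x by rewrite subr_ge0.
rewrite -natr1.
have m0 : 0 <= (m%:R : R) by [].
have h3 : 0 <= ((1 - x) ^+ m - (1 - m%:R * x)) * (1 - x) by rewrite mulr_ge0 // subr_ge0.
have h4 : 0 <= m%:R * x * x by rewrite !mulr_ge0.
nra.
Qed.
Lemma nbr n (p0 : {perm 'I_n}) (x j : 'I_n) :
  [set x; j] \in cyc_edges p0 -> j != x ->
  j \in [set p0 (ordS ((p0^-1)%g x)); p0 (ord_pred ((p0^-1)%g x))].
Proof.
case/imsetP => m _ e hjx.
have hx : x \in [set p0 m; p0 (ordS m)] by rewrite -e set21.
have hj : j \in [set p0 m; p0 (ordS m)] by rewrite -e set22.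
case/set2P: hx => ex; case/set2P: hj => ej.
- by move: hjx; rewrite ej ex eqxx.
- by rewrite ex permK ej set21.
- by rewrite ex permK ordSK ej set22.
- by move: hjx; rewrite ej ex eqxx.
Qed.

Lemma sum_if (R : nmodType) (T : finType) (P Q : pred T) (c : R) :
  \sum_(j | P j) (if Q j then c else 0) = c *+ #|[pred j | P j && Q j]|.
Proof. by rewrite -big_mkcondr -sumr_const. Qed.

Lemma prod_if_ge (R : realFieldType) (T : finType) (P Q : pred T) (c : R) m :
  0 <= c -> c <= 1 -> (#|[pred j | P j && Q j]| <= m)%N ->
  c ^+ m <= \prod_(j | P j) (if Q j then c else 1).
Proof.
move=> c0 c1 hm; rewrite -big_mkcondr.
rewrite (_ : \prod_(j | P j && Q j) c = \prod_(j in [pred j | P j && Q j]) c) //.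
by rewrite prodr_const; apply: ler_wiXn2l.
Qed.

Lemma prod_const_ge (R : realFieldType) (T : finType) (P : pred T) (c : R) m :
  0 <= c -> c <= 1 -> (#|T| <= m)%N ->
  c ^+ m <= \prod_(j | P j) c.
Proof.
move=> c0 c1 hm; rewrite prodr_const; apply: ler_wiXn2l => //.
by apply: leq_trans hm; apply: max_card.
Qed.
Lemma card_aux2 (c : nat) (d : bool) : (d.+1 = true + c -> c <= 1)%N.
Proof. case: d => /=; lia. Qed.

Lemma fin1 (R : realFieldType) (a S : R) : 0 < S -> S <= 2 -> 0 < a -> a * (1/4) <= a / S.
Proof. move=> *; rewrite ler_pdivlMr //; nra. Qed.

Lemma fin2 (R : realFieldType) (a S : R) : 0 < S -> S <= 1 -> 0 < a -> a <= a / S.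
Proof. move=> *; rewrite ler_pdivlMr //; nra. Qed.

Lemma fin3 (R : realFieldType) (a g b S : R) : 0 < S -> S <= 2 -> 0 <= a -> a <= 1 ->
  0 <= g -> g <= 1 -> 0 < b -> a * g * (b / 2) <= b / S.
Proof.
move=> *; rewrite ler_pdivlMr //.
have t0 : 0 <= a * g by rewrite mulr_ge0.
have t1 : a * g <= 1 by nra.
have h1 : (b/2) * S <= b by nra.
have h2 : 0 <= (b/2) * S by rewrite mulr_ge0 //; [lra | lra].
by rewrite -[a * g * _ * S]mulrA; apply: le_trans (ler_piMl h2 t1) h1.
Qed.

Lemma card_aux c1 c2 m : (true + c1 + c2 = m -> c2 <= m.-1)%N.
Proof. lia. Qed.

Lemma step_bound (R : realFieldType) n (p0 q : {perm 'I_n}) (i : 'I_n) :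
  (4 <= n)%N -> (i.+1 < n)%N ->
  (1 - 1/n%:R) * (if (val i == 0%N) || ([set q (ord_pred i); q i] \notin cyc_edges p0) then 1/4 else 1)
    * (if [set q i; q (ordS i)] \notin cyc_edges p0 then 1/(n%:R * (n-2)%:R) / 2 else 1)
  <= PiH R (cyc_edges p0) (q i) (q (ordS i)) /
     \sum_(j | j \notin [set q m | m : 'I_n & (m <= i)%N]) PiH R (cyc_edges p0) (q i) j.
Proof.
move=> n4 hi.
set H := cyc_edges p0.
set V := [set q m | m : 'I_n & (m <= i)%N].
set x := q i.
set S := \sum_(j | j \notin V) _.
set r : R := n%:R.
set a : R := 1 - 1/r.
set b : R := 1/(r * (n-2)%:R).
have n1 : (0 < n)%N by apply: leq_trans n4.
have n2 : (n-2)%:R = r - 2 :> R by rewrite natrB //; apply: leq_trans n4.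
have r4 : 4 <= r by rewrite /r (ler_nat R 4 n).
have r0 : r != 0 by apply/eqP => e; move: r4; rewrite e; lra.
have r20 : r - 2 != 0 by apply/eqP => e; move: r4; lra.
have ar : a * r = r - 1 by rewrite /a; field.
have br : b * (r * (r - 2)) = 1 by rewrite /b n2; field; rewrite r20 r0.
have b0 : 0 < b by rewrite /b n2 divr_gt0 // mulr_gt0 //; lra.
have a34 : 3/4 <= a by move: ar; nra.
have a1 : a <= 1 by move: ar; nra.
have rr : 8 <= r * (r - 2) by nra.
have ab : b <= a by nra.
have key : b * (r - 1) + (a - b) = 1 by rewrite /a /b n2; field; rewrite r20 r0.
have xV : x \in V by apply/imsetP; exists i; rewrite ?inE.
have yV : q (ordS i) \notin V.
  apply/imsetP => -[m]; rewrite inE => hm /perm_inj e.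
  by move: hm; rewrite -e valS hi ltnn.
have xy : x != q (ordS i) by rewrite (inj_eq perm_inj) eq_sym ordS_neq //; apply: leq_trans n4.
have PiE : forall j, x != j -> PiH R H x j = if [set x; j] \in H then a else b.
  by move=> j hj; rewrite /PiH (negbTE hj).
have Pi0 : forall j, 0 <= PiH R H x j.
  move=> j; case: (eqVneq x j) => [<-|hj]; first by rewrite /PiH eqxx.
  rewrite PiE //; case: ifP => _; lra.
have Spos : 0 < S.
  rewrite /S (bigD1 (q (ordS i))) //=.
  have : 0 < PiH R H x (q (ordS i)) by rewrite PiE //; case: ifP => _; lra.
  have : 0 <= \sum_(j | (j \notin V) && (j != q (ordS i))) PiH R H x j by apply: sumr_ge0.
  lra.
set U := [pred j | j \notin V].
set UN := [pred j | (j \notin V) && ([set x; j] \in H)].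
have Sle : S <= b * (#|U|)%:R + (a - b) * (#|UN|)%:R.
  apply: le_trans (_ : S <= \sum_(j | j \notin V) (b + (if [set x; j] \in H then a - b else 0))) _.
    apply: ler_sum => j jV.
    have jx : x != j by apply: contraNneq jV => <-.
    rewrite PiE //; case: ifP => _; lra.
  rewrite big_split sum_if.
  rewrite (_ : \sum_(j | j \notin V) b = \sum_(j in U) b) // sumr_const.
  by rewrite !mulr_natr.
have cU : (#|U| <= n.-1)%N.
  have -> : #|U| = #|~: V| by apply: eq_card => j; rewrite in_setC.
  have := cardsC V; rewrite card_ord (cardsD1 x V) xV.
  exact: card_aux.
have cUr : (#|U|)%:R <= r - 1.
  have -> : r - 1 = (n.-1)%:R by rewrite /r -(prednK n1) -natr1 addrK.
  by rewrite ler_nat.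
set y1 := p0 (ordS ((p0^-1)%g x)).
set y2 := p0 (ord_pred ((p0^-1)%g x)).
have UNsub : UN \subset [set y1; y2].
  apply/subsetP => j; rewrite inE => /andP [jV jH].
  apply: nbr => //; by apply: contraNneq jV => ->.
have cN : (#|UN| <= 2)%N.
  apply: leq_trans (subset_leq_card UNsub) _; rewrite cards2; by case: (_ != _).
have t1 : b * (#|U|)%:R <= b * (r - 1) by rewrite ler_pM2l.
have ab0 : 0 <= a - b by rewrite subr_ge0.
have cNr : (#|UN|)%:R <= 2 :> R by rewrite (ler_nat R _ 2).
have t2 : (a - b) * (#|UN|)%:R <= (a - b) * 2 by rewrite ler_wpM2l.
have hS2 : S <= 2 by lra.
rewrite (PiE _ xy).
case E1: ([set x; q (ordS i)] \in H) => /=.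
- case E2: ((val i == 0%N) || ([set q (ord_pred i); q i] \notin cyc_edges p0)).
  + by rewrite mulr1; apply: fin1 => //; lra.
  move/negbT: E2; rewrite negb_or negbK => /andP [i0 zH].
  set z := q (ord_pred i).
  have i0' : (0 < i)%N by rewrite lt0n.
  have zV : z \in V.
    by apply/imsetP; exists (ord_pred i); rewrite // inE val_pred // leq_pred.
  have zx : z != x.
    rewrite (inj_eq perm_inj); apply/eqP => e.
    by move: (ordS_neq i (leq_trans (isT : (2 <= 4)%N) n4)); rewrite -{1}e ord_predK eqxx.
  have zN : z \in [set y1; y2] by apply: nbr => //; rewrite /H setUC.
  have UNsub2 : UN \subset [set y1; y2] :\ z.
    apply/subsetP => j jU; rewrite in_setD1 (subsetP UNsub) // andbT.
    move: jU; rewrite inE => /andP [jV _]; by apply: contraNneq jV => ->.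
  have cN1 : (#|UN| <= 1)%N.
    apply: leq_trans (subset_leq_card UNsub2) _.
    have := cardsD1 z [set y1; y2]; rewrite zN cards2.
    exact: card_aux2.
  have cNr1 : (#|UN|)%:R <= 1 :> R by rewrite (ler_nat R _ 1).
  have t3 : (a - b) * (#|UN|)%:R <= (a - b) * 1 by rewrite ler_wpM2l.
  have hS1 : S <= 1 by lra.
  by rewrite !mulr1; apply: fin2 => //; lra.
- have g2 : forall c : bool, 0 <= (if c then 1/4 else 1 : R) <= 1 by case => /=; lra.
  have := g2 ((val i == 0%N) || ([set q (ord_pred i); q i] \notin cyc_edges p0)).
  move: (if _ then _ else _) => g /andP [g0 g1].
  apply: fin3 => //; lra.
Qed.
Lemma count1 n (q : {perm 'I_n}) (H B : {set {set 'I_n}}) k :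
  (3 <= n)%N -> #|B| = k ->
  (forall i : 'I_n, [set q i; q (ordS i)] \notin H -> [set q i; q (ordS i)] \in B) ->
  (forall i : 'I_n, i.+1 = n -> [set q i; q (ordS i)] \in B) ->
  (#|[set i : 'I_n | (i.+1 < n)%N && ([set q i; q (ordS i)] \notin H)]| <= k.-1)%N.
Proof.
move=> n3 cB hB hl.
have n1 : (n.-1 < n)%N by rewrite ltn_predL (leq_trans _ n3).
set il := Ordinal n1.
have ilB := hl il (prednK (leq_trans (isT : (0 < 3)%N) n3)).
set E := fun i : 'I_n => [set q i; q (ordS i)].
have Einj : injective E := @edge_inj n q n3.
rewrite -(card_imset _ Einj).
have -> : k.-1 = #|B :\ E il| by rewrite -cB (cardsD1 (E il) B) ilB.
apply: subset_leq_card; apply/subsetP => ee /imsetP [i]; rewrite inE => /andP [hi hH] ->.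
rewrite in_setD1 hB // andbT (inj_eq Einj).
apply/eqP => e; move: hi; rewrite e /= prednK ?ltnn //; exact: leq_trans _ n3.
Qed.

Lemma card_aux3 (a b c k : nat) : (a <= 1 -> b <= k.-1 -> c <= a + b -> 0 < k -> c <= k)%N.
Proof. lia. Qed.

Lemma count2 n (q : {perm 'I_n}) (H B : {set {set 'I_n}}) k :
  (3 <= n)%N -> #|B| = k ->
  (forall i : 'I_n, [set q i; q (ordS i)] \notin H -> [set q i; q (ordS i)] \in B) ->
  (forall i : 'I_n, i.+1 = n -> [set q i; q (ordS i)] \in B) ->
  (#|[pred i : 'I_n | (i.+1 < n)%N &&
      ((val i == 0%N) || ([set q (ord_pred i); q i] \notin H))]| <= k)%N.
Proof.
move=> n3 cB hB hl.
have n0 : (0 < n)%N by apply: leq_trans n3.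
set C1 := [set i : 'I_n | (i.+1 < n)%N && ([set q i; q (ordS i)] \notin H)].
have c1 := count1 n3 cB hB hl.
have kpos : (0 < k)%N.
  have n1 : (n.-1 < n)%N by rewrite ltn_predL.
  rewrite -cB card_gt0; apply/set0Pn; eexists; apply: (hl (Ordinal n1)).
  by rewrite /= prednK.
have sub : [pred i : 'I_n | (i.+1 < n)%N &&
      ((val i == 0%N) || ([set q (ord_pred i); q i] \notin H))]
      \subset [set Ordinal n0] :|: [set ordS i | i in C1].
  apply/subsetP => i; rewrite inE => /andP [hi].
  case: (posnP i) => [i0 _|i0 /= hH].
    by rewrite in_setU in_set1; apply/orP; left; apply/eqP; apply: val_inj.
  rewrite in_setU; apply/orP; right; apply/imsetP; exists (ord_pred i); last by rewrite ord_predK.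
  rewrite inE ord_predK hH andbT.
  by rewrite val_pred // prednK // ltnW.
have h3 := leq_trans (subset_leq_card sub) (leq_card_setU _ _).
apply: (card_aux3 _ _ h3 kpos).
- by rewrite cards1.
- exact: leq_trans (leq_imset_card _ _) c1.
Qed.
Lemma order_bound (R : realFieldType) n (p0 q : {perm 'I_n}) (B : {set {set 'I_n}}) k :
  (4 <= n)%N -> #|B| = k ->
  (forall i : 'I_n, [set q i; q (ordS i)] \notin cyc_edges p0 -> [set q i; q (ordS i)] \in B) ->
  (forall i : 'I_n, i.+1 = n -> [set q i; q (ordS i)] \in B) ->
  (1/n%:R) * ((1 - 1/n%:R) ^+ n * (1/4) ^+ k * (1/(n%:R * (n-2)%:R) / 2) ^+ k.-1)
    <= order_prob (PiH R (cyc_edges p0)) q.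
Proof.
move=> n4 cB hB hl.
have n3 : (3 <= n)%N by apply: leq_trans n4.
have r4 : 4 <= n%:R :> R by rewrite (ler_nat R 4 n).
rewrite /order_prob; apply: ler_wpM2l; first by rewrite divr_ge0 //; lra.
set a : R := 1 - 1/n%:R.
set b : R := 1/(n%:R * (n-2)%:R).
have a0 : (0 <= a) && (a <= 1).
  have u0 : 0 <= 1/n%:R :> R by rewrite divr_ge0 //; lra.
  have u1 : 1/n%:R <= 1/4 :> R by rewrite ler_pdivrMr; lra.
  rewrite /a; apply/andP; split; lra.
have b0 : (0 <= b / 2) && (b / 2 <= 1).
  have n2 : (n-2)%:R = n%:R - 2 :> R by rewrite natrB //; apply: leq_trans n4.
  have rr : 8 <= n%:R * (n%:R - 2) :> R by nra.
  rewrite /b n2; apply/andP; split.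
    by rewrite !divr_ge0 // mulr_ge0 //; lra.
  have z0 : 0 < n%:R * (n%:R - 2) :> R by lra.
  rewrite ler_pdivrMr; last by lra.
  rewrite ler_pdivrMr //; lra.
case/andP: a0 => a0 a1; case/andP: b0 => b0 b1.
apply: le_trans (_ : _ <= \prod_(i : 'I_n | (i.+1 < n)%N)
   (a * (if (val i == 0%N) || ([set q (ord_pred i); q i] \notin cyc_edges p0) then 1/4 else 1)
    * (if [set q i; q (ordS i)] \notin cyc_edges p0 then b / 2 else 1))) _; last first.
  apply: ler_prod => i hi; rewrite step_bound // andbT.
  rewrite !mulr_ge0 //; case: ifP => _ //; lra.
rewrite !big_split /=.
have g2 : (0 <= (1/4 : R)) && (1/4 <= 1 :> R) by apply/andP; split; lra.
case/andP: g2 => g20 g21.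
apply: ler_pM.
- by rewrite !mulr_ge0 // exprn_ge0.
- by rewrite exprn_ge0.
- apply: ler_pM.
  + by rewrite exprn_ge0.
  + by rewrite exprn_ge0.
  + by apply: prod_const_ge => //; rewrite card_ord.
  + apply: prod_if_ge => //; exact: count2 n3 cB hB hl.
- apply: prod_if_ge => //.
  apply: leq_trans (count1 n3 cB hB hl).
  by apply: subset_leq_card; apply/subsetP => i; rewrite inE.
Qed.
Lemma aux_ineq (R : realFieldType) (r : R) : 4 <= r -> (1/2)/r^+2 <= 1/(r*(r-2))/2.
Proof.
move=> r4; rewrite expr2.
have r0 : r != 0 by apply/eqP => e; move: r4; rewrite e; lra.
have r20 : r - 2 != 0 by apply/eqP => e; move: r4; lra.
have e : 1/(r*(r-2))/2 - (1/2)/(r*r) = 1/(r*r*(r-2)) by field; rewrite r0 r20.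
have : 0 <= 1/(r*r*(r-2)) by rewrite divr_ge0 // !mulr_ge0 //; lra.
lra.
Qed.

Lemma kaux k : (2 <= k)%N -> (2 * k - 1 = (2 * k.-1).+1)%N.
Proof. lia. Qed.

Lemma half_aux n : (n./2 * 2 <= n /\ n <= n./2 * 2 + 1)%N.
Proof. have := odd_double_half n; rewrite -muln2; case: (odd n) => /=; lia. Qed.

Lemma pow_bound (R : realFieldType) n : (4 <= n)%N -> 1/8 <= (1 - 1/n%:R) ^+ n :> R.
Proof.
move=> n4.
have r4 : 4 <= n%:R :> R by rewrite (ler_nat R 4 n).
set s := n./2.
have [hs1 hs2] := half_aux n.
have sr : s%:R * 2 <= n%:R :> R by rewrite -(natrM R s 2) ler_nat.
have u0 : 0 <= 1/n%:R :> R by rewrite divr_ge0 //; lra.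
have u1 : 1/n%:R <= 1/4 :> R by rewrite ler_pdivrMr; lra.
have hx : s%:R * (1/n%:R) <= 1/2 :> R by rewrite mulrA mulr1 ler_pdivrMr; lra.
have hb := bernoulli s u0 (le_trans u1 (_ : 1/4 <= 1 :> R)).
have as2 : 1/2 <= (1 - 1/n%:R) ^+ s :> R by apply: le_trans (hb _); lra.
have a34 : 3/4 <= 1 - 1/n%:R :> R by lra.
apply: le_trans (_ : _ <= (1 - 1/n%:R) ^+ (s * 2 + 1)) _; last first.
  by apply: ler_wiXn2l => //; lra.
rewrite exprD exprM expr1.
have : 1/4 <= ((1 - 1/n%:R) ^+ s) ^+ 2 :> R.
  have h0 : 0 <= 1/2 :> R by lra.
  apply: le_trans (_ : (1/2) ^+ 2 <= _); first by rewrite expr2; lra.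
  apply: lerXn2r => //; rewrite nnegrE //; lra.
move: (((1 - 1/n%:R) ^+ s) ^+ 2) => t ht; nra.
Qed.

Lemma Pi_ge0 (R : realFieldType) n (H : {set {set 'I_n}}) i j : (4 <= n)%N -> 0 <= PiH R H i j.
Proof.
move=> n4.
have r4 : 4 <= n%:R :> R by rewrite (ler_nat R 4 n).
have n2 : (n-2)%:R = n%:R - 2 :> R by rewrite natrB //; apply: leq_trans n4.
rewrite /PiH; case: ifP => _ //; case: ifP => _.
  by rewrite subr_ge0 ler_pdivrMr; lra.
by rewrite n2 divr_ge0 // mulr_ge0 //; lra.
Qed.

Lemma op_ge0 (R : realFieldType) n (H : {set {set 'I_n}}) p : (4 <= n)%N ->
  0 <= order_prob (PiH R H) p.
Proof.
move=> n4; rewrite /order_prob mulr_ge0 ?divr_ge0 // prodr_ge0 // => i _.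
by rewrite divr_ge0 ?sumr_ge0 // => *; apply: Pi_ge0.
Qed.

Unset Implicit Arguments.

Theorem claim1 (R : realFieldType) (k : nat) (hk : (2 <= k)%N) :
  exists c : R, 0 < c /\
    forall (n : nat) (H H' : {set {set 'I_n}}),
      (4 <= n)%N -> (k <= n)%N ->
      ham_cycle H -> k_exchange H H' k ->
      c / (n%:R ^+ (2 * k - 1)) <= gen_prob (PiH R H) H'.
Proof.
exists ((1/8) * (1/4) ^+ k * (1/2) ^+ k.-1); split.
  by rewrite !mulr_gt0 // ?exprn_gt0 //; lra.
move=> n H H' n4 kn [p0 ->] [[p hp] [A [B [AH cA dB cB hH']]]].
have n3 : (3 <= n)%N by apply: leq_trans n4.
have : (0 < #|B|)%N by rewrite cB; apply: leq_trans hk.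
rewrite card_gt0 => /set0Pn [beta betaB].
have : beta \in cyc_edges p by rewrite -hp hH' in_setU betaB orbT.
case/imsetP => j _ ebeta.
set sig : {perm 'I_n} := ((perm (@ordS_inj n)) ^+ j.+1)%g.
have sE : forall x, sig x = iter j.+1 (@ordS n) x.
  by move=> x; rewrite /sig permX; apply: eq_iter => y; rewrite permE.
have sS : forall x, sig (ordS x) = ordS (sig x).
  by move=> x; rewrite !sE -iterSr iterS.
set q : {perm 'I_n} := (sig * p)%g.
have qE : forall x, q x = p (sig x) by move=> x; rewrite /q permM.
have eq_e : forall i, [set q i; q (ordS i)] = [set p (sig i); p (ordS (sig i))].
  by move=> i; rewrite !qE sS.
have cq : cyc_edges q = H'.
  rewrite hp; apply/setP => e; apply/imsetP/imsetP => -[i _ ->].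
    by exists (sig i) => //; rewrite eq_e.
  by exists ((sig^-1)%g i) => //; rewrite eq_e permKV.
have hB : forall i : 'I_n, [set q i; q (ordS i)] \notin cyc_edges p0 -> [set q i; q (ordS i)] \in B.
  move=> i hi.
  have : [set q i; q (ordS i)] \in H' by rewrite -cq; apply/imsetP; exists i.
  by rewrite hH' in_setU in_setD (negbTE hi) andbF.
have hl : forall i : 'I_n, i.+1 = n -> [set q i; q (ordS i)] \in B.
  move=> i hi; rewrite eq_e.
  suff -> : sig i = j by rewrite -ebeta.
  apply: val_inj => /=; rewrite sE valiter.
  have -> : (i + j.+1 = n + j)%N by rewrite addnS -addSn hi.
  by rewrite modnDl modn_small.
have hg : order_prob (PiH R (cyc_edges p0)) q <= gen_prob (PiH R (cyc_edges p0)) H'.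
  rewrite /gen_prob (bigD1 q) /=; last by rewrite cq eqxx.
  rewrite lerDl sumr_ge0 // => p' _; exact: op_ge0.
apply: le_trans hg; apply: le_trans (order_bound R n4 cB hB hl).
set r : R := n%:R.
have r4 : 4 <= r by rewrite /r (ler_nat R 4 n).
have r0 : r != 0 by apply/eqP => e; move: r4; rewrite e; lra.
have n2 : (n-2)%:R = r - 2 :> R by rewrite natrB //; apply: leq_trans n4.
rewrite kaux // exprS exprM.
have rk0 : (r ^+ 2) ^+ k.-1 != 0 by rewrite !expf_neq0.
have -> : 1 / 8 * (1 / 4) ^+ k * (1 / 2) ^+ k.-1 / (r * (r ^+ 2) ^+ k.-1)
   = 1/r * (1/8 * (1/4) ^+ k * ((1/2) / r ^+ 2) ^+ k.-1).
  rewrite [((1/2) / r ^+ 2) ^+ k.-1]expr_div_n; move: rk0; move: ((r ^+ 2) ^+ k.-1) ((1/4 : R) ^+ k) ((1/2 : R) ^+ k.-1) => Z X Y hZ.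
  by field; rewrite r0 hZ.
apply: ler_wpM2l; first by rewrite divr_ge0 //; lra.
have q0 : 0 <= (1/4 : R) ^+ k by rewrite exprn_ge0 //; lra.
apply: ler_pM.
- by rewrite mulr_ge0 //; lra.
- by rewrite exprn_ge0 // divr_ge0 //; [lra | rewrite exprn_ge0 //; lra].
- by apply: ler_wpM2r => //; apply: pow_bound.
- apply: lerXn2r; rewrite ?nnegrE.
  + by rewrite divr_ge0 //; [lra | rewrite exprn_ge0 //; lra].
  + rewrite n2 !divr_ge0 //; try lra; rewrite mulr_ge0 //; lra.
  rewrite n2; exact: aux_ineq.
Qed.
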